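(* Let $b>1$ and $\mu\ge0$. Suppose: (i) $P$ satisfies $(1/2,b)$-multiplicative-expansion on $\mathcal{X}$; (ii) $P$ is $\mathcal{A}$-separated by the ground-truth classifier, i.e. $\mathcal{R}_{\mathcal{A}}(G^* )\le\mu$; (iii) for classifiers $G$, whenever $P$ satisfies $(c,\rho)$-constant-expansion for some $c$, $\mathcal{R}_{\mathcal{A}}(G)<\rho$, and $\min_i P(\{x:G(x)=i\})>2\max\{c,\mathcal{R}_{\mathcal{A}}(G)\}$, there exists a permutation $\pi$ of $[K]$ with $P(\{x:\pi(G(x))\neq G^*(x)\})\le\max\{c,\mathcal{R}_{\mathcal{A}}(G)\}+\mathcal{R}_{\mathcal{A}}(G)$. Assume further $\min_{y\in[K]}P(\{x:G^*(x)=y\})>\max\{\frac{2}{b-1},2\}\mu$. Then any minimizer $\widehat G$ of $$\min_G \mathcal{R}_{\mathcal{A}}(G)\quad\text{subject to}\quad \min_{y\in[K]}\mathbb{E}_P[\mathbf{1}(G(x)=y)]>\max\left\{\tfrac{2}{b-1},2\right\}\mathcal{R}_{\mathcal{A}}(G)$$ (over classifiers $G:\mathcal{X}\to[K]$) satisfies $\mathrm{Err}_{\mathrm{unsup}}(\widehat G)\le\max\left\{\tfrac{2}{b-1},2\right\}\mu$.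
   Context: $P$ is a distribution on $\mathcal{X}$ with ground-truth labelling $G^*:\mathcal{X}\to[K]$, $\mathcal{Q}_i:=\{x:G^*(x)=i\}$, $P_i(S)=P(S\cap\mathcal{Q}_i)/P(\mathcal{Q}_i)$. With augmentation maps $\mathcal{T}_{wa}$ and radius $r$: $\mathcal{A}(x):=\{x':\exists T\in\mathcal{T}_{wa},\ \|x'-T(x)\|\le r\}$, $\mathcal{N}(x):=\{x':\mathcal{A}(x)\cap\mathcal{A}(x')\neq\emptyset\}$, $\mathcal{N}(S):=\bigcup_{x\in S}\mathcal{N}(x)$, $\mathcal{N}^*(S):=\bigcup_{i}(\mathcal{N}(S\cap\mathcal{Q}_i)\cap\mathcal{Q}_i)$. $(a,b)$-multiplicative-expansion: for every $i$ and $S\subseteq\mathcal{Q}_i$ with $P_i(S)\le a$, $P_i(\mathcal{N}(S))\ge\min\{bP_i(S),1\}$. $(c,\rho)$-constant-expansion: for every $S$ with $P(S)\ge c$ and $P(S\cap\mathcal{Q}_i)\le P(\mathcal{Q}_i)/2$ for all $i$, $P(\mathcal{N}^*(S)\setminus S)\ge\min\{\rho,P(S)\}$. $\mathcal{R}_{\mathcal{A}}(G):=\mathbb{E}_{x\sim P}[\mathbf{1}(\exists x'\in\mathcal{A}(x)\text{ with }G(x')\neq G(x))]$. $\mathrm{Err}_{\mathrm{unsup}}(G):=\min_{\pi}P(\{x:\pi(G(x))\neq G^*(x)\})$ over permutations $\pi$ of $[K]$. *)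

(* Defs.v *)
From HB Require Import structures.
From mathcomp Require Import all_boot all_order all_algebra.
From mathcomp Require Import all_classical all_reals all_analysis.
From mathcomp Require Import fingroup perm.
Set Implicit Arguments. Unset Strict Implicit. Unset Printing Implicit Defensive.
Import Order.TTheory GRing.Theory Num.Theory.
Local Open Scope classical_set_scope.
Local Open Scope ring_scope.

Section Defs.
Context {d : measure_display} {X : measurableType d} {R : realType}.
Variable P : probability X R.

(* Probability of an arbitrary (possibly non-measurable) set:
   the outer measure induced by P, as a real number. *)
Definition Pr (S : set X) : R := fine (mu_ext P S).

Variable K : nat.

Definition classifier (G : X -> 'I_K) : Prop :=
  forall i : 'I_K, measurable (G @^-1` [set i]).

Variable Gstar : X -> 'I_K.
Definition Qc (i : 'I_K) : set X := [set x | Gstar x = i].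
Definition Pc (i : 'I_K) (S : set X) : R := Pr (S `&` Qc i) / Pr (Qc i).

(* augmentation set A(x) = {x' | exists T in Twa, ||x' - T x|| <= r},
   with dist x' y standing for ||x' - y|| *)
Variable dist : X -> X -> R.
Variable Twa : set (X -> X).
Variable r : R.
Definition Aug (x : X) : set X :=
  [set x' | exists2 T, Twa T & dist x' (T x) <= r].
Definition Nb (x : X) : set X := [set x' | Aug x `&` Aug x' !=set0].
Definition NbS (S : set X) : set X := \bigcup_(x in S) Nb x.
Definition NbStar (S : set X) : set X :=
  \bigcup_(i in [set: 'I_K]) (NbS (S `&` Qc i) `&` Qc i).

Definition mult_expansion (a b : R) : Prop :=
  forall (i : 'I_K) (S : set X), S `<=` Qc i -> Pc i S <= a ->
    Pc i (NbS S) >= Num.min (b * Pc i S) 1.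

Definition const_expansion (c rho : R) : Prop :=
  forall S : set X, Pr S >= c ->
    (forall i : 'I_K, Pr (S `&` Qc i) <= Pr (Qc i) / 2) ->
    Pr (NbStar S `\` S) >= Num.min rho (Pr S).

Definition RA (G : X -> 'I_K) : R :=
  Pr [set x | exists2 x', Aug x x' & G x' <> G x].

Definition mismatch (G : X -> 'I_K) (pi : {perm 'I_K}) : R :=
  Pr [set x | pi (G x) <> Gstar x].

Definition Err_unsup (G : X -> 'I_K) : R :=
  \big[Num.min/1]_(pi : {perm 'I_K}) mismatch G pi.

End Defs.

(* Main.v *)
Require Import Defs.
From HB Require Import structures.
From mathcomp Require Import all_boot all_order all_algebra.
From mathcomp Require Import all_classical all_reals all_analysis.
From mathcomp Require Import fingroup perm.
From mathcomp Require Import ring lra.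
Import Order.TTheory GRing.Theory Num.Theory.
Local Open Scope classical_set_scope.
Local Open Scope ring_scope.

Section PrLemmas.
Context {d : measure_display} {X : measurableType d} {R : realType}.
Variable P : probability X R.

Lemma mu_ext_le1 (A : set X) : (mu_ext P A <= 1)%E.
Proof.
apply: (@le_trans _ _ (mu_ext P setT)); first exact: le_mu_ext.
by rewrite measurable_mu_extE // probability_le1.
Qed.

Lemma PrE (A : set X) : ((Pr P A)%:E = mu_ext P A)%E.
Proof.
rewrite /Pr fineK // ge0_fin_numE ?mu_ext_ge0 //.
exact: (le_lt_trans (mu_ext_le1 A) (ltry _)).
Qed.

Lemma Pr_ge0 (A : set X) : 0 <= Pr P A.
Proof. by rewrite -lee_fin PrE mu_ext_ge0. Qed.

Lemma Pr_le1 (A : set X) : Pr P A <= 1.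
Proof. by rewrite -lee_fin PrE mu_ext_le1. Qed.

Lemma Pr_le (A B : set X) : A `<=` B -> Pr P A <= Pr P B.
Proof. by move=> AB; rewrite -lee_fin !PrE le_mu_ext. Qed.

Lemma Pr_U (A B : set X) : Pr P (A `|` B) <= Pr P A + Pr P B.
Proof. by rewrite -lee_fin EFinD !PrE outer_measureU2. Qed.

Lemma Pr_D (A B : set X) : Pr P A - Pr P B <= Pr P (A `\` B).
Proof.
rewrite lerBlDr; apply: le_trans (Pr_U _ _); apply: Pr_le.
by move=> x Ax; case: (pselect (B x)) => Bx; [right|left].
Qed.

Lemma Pr_cara (A Q : set X) : measurable Q ->
  Pr P A = Pr P (A `&` Q) + Pr P (A `&` ~` Q).
Proof.
move=> mQ; apply: EFin_inj; rewrite EFinD !PrE.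
exact: caratheodory_measurable_mu_ext.
Qed.


Lemma Pr0 : Pr P set0 = 0.
Proof. by apply: EFin_inj; rewrite PrE mu_ext0. Qed.

Lemma Pr_part_seq K (G : X -> 'I_K) :
  (forall i, measurable (G @^-1` [set i])) -> forall (A : set X) (s : seq 'I_K),
  uniq s ->
  Pr P (A `&` [set x | G x \in s]) = \sum_(i <- s) Pr P (A `&` [set x | G x = i]).
Proof.
move=> mG A; elim=> [|i s IH] /=.
  move=> _; rewrite big_nil (_ : _ `&` _ = set0) ?Pr0 //.
  by apply/seteqP; split => x //= [].
move=> /andP[nis us]; rewrite big_cons -IH // (Pr_cara _ _ (mG i)).
congr (Pr P _ + Pr P _); apply/seteqP; split => x /=.
- by move=> [[Ax _] ->].
- by move=> [Ax ->]; split => //; rewrite inE eqxx.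
- move=> [[Ax]]; rewrite inE => /orP[/eqP -> //|xs] _; by [].
- move=> [Ax xs]; split; first by rewrite inE xs orbT.
  by move=> Gi; move: nis; rewrite -Gi xs.
Qed.

Lemma Pr_part K (G : X -> 'I_K) :
  (forall i, measurable (G @^-1` [set i])) -> forall (A : set X),
  Pr P A = \sum_(i <- enum 'I_K) Pr P (A `&` [set x | G x = i]).
Proof.
move=> mG A; rewrite -Pr_part_seq ?enum_uniq //.
congr (Pr P _); apply/seteqP; split => x /=; first by move=> Ax; split => //; rewrite mem_enum.
by case.
Qed.

End PrLemmas.

Lemma mult_to_const d (X : measurableType d) (R : realType)
  (P : probability X R) (K : nat) (Gstar : X -> 'I_K)
  (dist : X -> X -> R) (Twa : set (X -> X)) (r : R) (b : R) :
  1 < b -> classifier Gstar -> (forall i, 0 < Pr P (Qc Gstar i)) ->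
  mult_expansion P Gstar dist Twa r (1 / 2) b ->
  forall c, const_expansion P Gstar dist Twa r c ((b - 1) * c).
Proof.
move=> hb hG hQ hm c S hc hbal.
set k := Num.min (b - 1) 1.
have k1 : k <= 1 by rewrite ge_min lexx orbT.
have kb : k <= b - 1 by rewrite ge_min lexx.
set T := NbStar Gstar dist Twa r S `\` S.
have cl : forall i, k * Pr P (S `&` Qc Gstar i) <= Pr P (T `&` Qc Gstar i).
  move=> i; set Si := S `&` Qc Gstar i; set q := Pr P (Qc Gstar i).
  set s := Pr P Si; set n := Pr P (NbS dist Twa r Si `&` Qc Gstar i).
  have s0 : 0 <= s by apply: Pr_ge0.
  have hq := hQ i.
  have SiQ : Si `&` Qc Gstar i = Si by rewrite /Si -setIA setIid.
  have hsq : s <= q / 2 := hbal i.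
  have := hm i Si (@subIsetr _ _ _) .
  rewrite /Pc SiQ -/s -/n -/q.
  move=> /(_ _)/wrap[].
    by rewrite ler_pdivrMr // mul1r mulrC.
  rewrite ge_min mulrA ler_pM2r ?invr_gt0 // ler_pdivlMr // mul1r => hn.
  have : n - s <= Pr P (T `&` Qc Gstar i).
    apply: (le_trans (Pr_D P (NbS dist Twa r Si `&` Qc Gstar i) Si)); apply: Pr_le => x [[Nx Qx] nSx]; split => //.
    split; last by move=> Sx; apply: nSx.
    by exists i.
  have h1 : k * s <= (b - 1) * s by apply: ler_wpM2r.
  have h2 : k * s <= 1 * s by apply: ler_wpM2r.
  case/orP: hn => hn; lra.
rewrite (@Pr_part _ _ _ P _ _ hG T).
apply: le_trans (_ : k * Pr P S <= _).
  rewrite ge_min /k; case: (leP (b - 1) 1) => hb1.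
    by apply/orP; left; apply: ler_wpM2l => //; lra.
  by apply/orP; right; rewrite mul1r.
rewrite (@Pr_part _ _ _ P _ _ hG S) mulr_sumr; apply: ler_sum => i _; exact: cl.
Qed.

Theorem theorem1 (d : measure_display) (X : measurableType d) (R : realType)
  (P : probability X R) (K : nat) (Gstar : X -> 'I_K)
  (dist : X -> X -> R) (Twa : set (X -> X)) (r : R) (b mu : R) :
  1 < b -> 0 <= mu ->
  classifier Gstar ->
  (* (i) *)
  mult_expansion P Gstar dist Twa r (1 / 2) b ->
  (* (ii) *)
  RA P dist Twa r Gstar <= mu ->
  (* (iii) *)
  (forall (G : X -> 'I_K) (c rho : R), classifier G ->
     const_expansion P Gstar dist Twa r c rho ->
     RA P dist Twa r G < rho ->
     (forall i : 'I_K, Pr P [set x | G x = i] >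
                       2 * Num.max c (RA P dist Twa r G)) ->
     exists pi : {perm 'I_K},
       mismatch P Gstar G pi <=
         Num.max c (RA P dist Twa r G) + RA P dist Twa r G) ->
  (* class balance of the ground truth *)
  (forall y : 'I_K, Pr P (Qc Gstar y) > Num.max (2 / (b - 1)) 2 * mu) ->
  forall Ghat : X -> 'I_K,
    (* Ghat is a minimizer of the constrained problem *)
    classifier Ghat ->
    (forall y : 'I_K, Pr P [set x | Ghat x = y] >
                      Num.max (2 / (b - 1)) 2 * RA P dist Twa r Ghat) ->
    (forall G : X -> 'I_K, classifier G ->
       (forall y : 'I_K, Pr P [set x | G x = y] >
                         Num.max (2 / (b - 1)) 2 * RA P dist Twa r G) ->
       RA P dist Twa r Ghat <= RA P dist Twa r G) ->
    Err_unsup P Gstar Ghat <= Num.max (2 / (b - 1)) 2 * mu.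
Proof.
move=> hb hmu hGs hmult hRA hiii hbal Ghat hGh hfeas hmin.
set M := Num.max (2 / (b - 1)) 2.
have b1 : 0 < b - 1 by rewrite subr_gt0.
have M2 : 2 <= M by rewrite le_max lexx orbT.
have M1 : 2 / (b - 1) <= M by rewrite le_max lexx.
have M0 : 0 <= M by apply: le_trans M2.
set a := RA P dist Twa r Ghat.
have a0 : 0 <= a by apply: Pr_ge0.
have aGs : a <= RA P dist Twa r Gstar.
  apply: hmin => // y; apply: le_lt_trans (hbal y).
  exact: ler_wpM2l.
have amu : a <= mu by apply: le_trans hRA.
have hQ : forall i, 0 < Pr P (Qc Gstar i).
  by move=> i; apply: le_lt_trans (hbal i); apply: mulr_ge0.
have hconst := @mult_to_const _ _ _ P K Gstar dist Twa r b hb hGs hQ hmult.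
set c0 := a / (b - 1).
have c00 : 0 <= c0 by apply: divr_ge0 => //; apply: ltW.
suff hE : Err_unsup P Gstar Ghat <= Num.max c0 a + a.
  apply: le_trans hE _; apply: le_trans (_ : M * a <= _); last exact: ler_wpM2l.
  have [h|h] := leP c0 a.
    apply: le_trans (_ : 2 * a <= _); first lra.
    exact: ler_wpM2r.
  apply: le_trans (_ : (2 / (b - 1)) * a <= _).
    rewrite /c0 in h *; rewrite (_ : 2 / (b - 1) * a = a / (b - 1) + a / (b - 1)); [lra|ring].
  exact: ler_wpM2r.
set m0 := Num.max c0 a.
apply/ler_addgt0Pr => e he.
set eps := \big[Num.min/1]_(i : 'I_K) (Pr P [set x | Ghat x = i] - 2 * m0).
have eps0 : 0 < eps.
  apply/bigmin_gtP; split => // i _; rewrite subr_gt0.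
  apply: le_lt_trans (hfeas i); rewrite /m0.
  have [h|h] := leP c0 a.
    by apply: ler_wpM2r.
  apply: le_trans (_ : (2 / (b - 1)) * a <= _); last exact: ler_wpM2r.
  by rewrite (_ : 2 * c0 = 2 / (b - 1) * a) // /c0; ring.
have epsi : forall i, eps <= Pr P [set x | Ghat x = i] - 2 * m0.
  by move=> i; apply: bigmin_le.
set del := Num.min e (eps / 4).
have del0 : 0 < del by rewrite lt_min he divr_gt0.
have dele : del <= e by rewrite ge_min lexx.
have deleps : del <= eps / 4 by rewrite ge_min lexx orbT.
set c := c0 + del.
have mc : Num.max c a <= m0 + del.
  rewrite ge_max; apply/andP; split.
    by rewrite /c lerD2r le_max lexx.
  by rewrite /m0; apply: le_trans (_ : Num.max c0 a <= _); [rewrite le_max lexx orbT | lra].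
have hrho : a < (b - 1) * c.
  rewrite /c mulrDr /c0 mulrC divfK ?lt0r_neq0 //.
  by rewrite ltrDl mulr_gt0.
have [pi hpi] := hiii Ghat c ((b - 1) * c) hGh (hconst c) hrho
  (fun i => ltac:(have := epsi i; lra)).
apply: le_trans (bigmin_le _ pi _) _.
apply: le_trans hpi _; rewrite -/a; lra.
Qed.
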